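(* Let $\mathcal{C},\mathcal{C}'$ be generalized categories. The following two conditions are equivalent, and if either holds then $\mathcal{C}$ and $\mathcal{C}'$ are equivalent (i.e. their categories of invertibles $\tilde{\mathcal{C}}$ and $\tilde{\mathcal{C}'}$ are isomorphic): (1) there are functors $F:\mathcal{C}\to\mathcal{C}'$ and $G:\mathcal{C}'\to\mathcal{C}$ such that the induced maps $\tilde F:\tilde{\mathcal{C}}\to\tilde{\mathcal{C}'}$ and $\tilde G:\tilde{\mathcal{C}'}\to\tilde{\mathcal{C}}$ are mutually inverse; (2) there are functors $F:\mathcal{C}\to\mathcal{C}'$ and $G:\mathcal{C}'\to\mathcal{C}$ with $F\circ G\cong\mathrm{id}_{\mathcal{C}'}$ and $G\circ F\cong\mathrm{id}_{\mathcal{C}}$.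
   Context: A generalized category is a tuple $(\mathcal{C},\le,s,t,\cdot)$ where $\mathcal{C}$ is a set, $\le$ a relation on $\mathcal{C}$, $s,t:\mathcal{C}\to\mathcal{C}$ maps (write $\bar a = s(a)$, $\hat a = t(a)$), and $\cdot$ a partially defined binary operation (write $ab$), such that: (1) $\le$ is a partial order; (2) $ab$ is defined iff $s(a)\le t(b)$; (3) if $(ab)c$ or $a(bc)$ is defined then $(ab)c=a(bc)$; (4) if $ab$ is defined then $s(ab)=s(b)$ and $t(ab)=t(a)$; (5) for every $a$ there is $b$ with $s(b)=t(b)=a$ such that $bc=c$ whenever $bc$ is defined and $cb=c$ whenever $cb$ is defined; this $b$ is unique, denoted $1_a$; (6) if $s(a)=t(a)=a$ then $ba=b$ whenever $ba$ is defined and $ab=b$ whenever $ab$ is defined; (7) if $a\le b$ then $s(a)\le s(b)$, $t(a)\le t(b)$ and $1_a\le 1_b$; and if $a\le b$, $c\le d$ and $ac,bd$ are defined then $ac\le bd$. A functor $F:\mathcal{C}\to\mathcal{D}$ is a map with $a\le b\Rightarrow F(a)\le F(b)$, $F(\bar a)=\overline{F(a)}$, $F(\hat a)=\widehat{F(a)}$, $F(ab)=F(a)F(b)$ whenever $ab$ is defined, and $F(1_a)=1_{F(a)}$. An element $a$ is invertible if there is $b$ with $ab=1_{\hat a}$, $ba=1_{\bar a}$. Write $a\sim b$ if there exist invertible $\theta_1,\theta_2$ with $\theta_1 a=b\theta_2$; $\tilde a$ denotes the $\sim$-class of $a$. The category of invertibles $\tilde{\mathcal{C}}$ is the set of $\sim$-classes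 with source $\tilde a\mapsto\widetilde{1_{\bar a}}$, target $\tilde a\mapsto\widetilde{1_{\hat a}}$, trivial order, and product $\tilde a\cdot\tilde b=\{\theta_1 a\theta_2 b\theta_3:\theta_i\text{ invertible},\ \theta_1a\theta_2b\theta_3\text{ defined}\}$; a functor $F$ induces $\tilde F(\tilde a):=\widetilde{F(a)}$. For functors $F,G:\mathcal{C}\to\mathcal{C}'$, $F\cong G$ means there exist maps $\theta_1,\theta_2:\mathcal{C}\to\mathcal{C}'$ with $\theta_1(a),\theta_2(a)$ invertible for all $a$ and $\theta_1(a)F(a)=G(a)\theta_2(a)$ (both sides defined) for all $a\in\mathcal{C}$. *)

(* Defs.v *)
Set Implicit Arguments.

Definition obind {A B : Type} (f : A -> option B) (o : option A) : option B :=
  match o with Some a => f a | None => None end.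

(** The identity [1_a]
    given by axiom (5) is recorded as the field [one]; axiom (5) is then
    split into existence ([one_*]) and uniqueness ([one_unique]). *)
Record GCat := {
  carrier :> Type;
  le : carrier -> carrier -> Prop;
  src : carrier -> carrier;
  tgt : carrier -> carrier;
  mul : carrier -> carrier -> option carrier;
  one : carrier -> carrier;
  le_refl : forall a, le a a;
  le_antisym : forall a b, le a b -> le b a -> a = b;
  le_trans : forall a b c, le a b -> le b c -> le a c;
  mul_defined : forall a b, mul a b <> None <-> le (src a) (tgt b);
  mul_assoc : forall a b c,
    obind (fun d => mul d c) (mul a b) <> None \/
    obind (fun d => mul a d) (mul b c) <> None ->
    obind (fun d => mul d c) (mul a b) = obind (fun d => mul a d) (mul b c);
  mul_src_tgt : forall a b ab, mul a b = Some ab -> src ab = src b /\ tgt ab = tgt a;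
  one_src : forall a, src (one a) = a;
  one_tgt : forall a, tgt (one a) = a;
  one_left : forall a c d, mul (one a) c = Some d -> d = c;
  one_right : forall a c d, mul c (one a) = Some d -> d = c;
  one_unique : forall a b, src b = a -> tgt b = a ->
    (forall c d, mul b c = Some d -> d = c) ->
    (forall c d, mul c b = Some d -> d = c) -> b = one a;
  obj_neutral : forall a, src a = a -> tgt a = a ->
    (forall b d, mul b a = Some d -> d = b) /\
    (forall b d, mul a b = Some d -> d = b);
  le_src_tgt_one : forall a b, le a b ->
    le (src a) (src b) /\ le (tgt a) (tgt b) /\ le (one a) (one b);
  le_mul : forall a b c d ac bd, le a b -> le c d ->
    mul a c = Some ac -> mul b d = Some bd -> le ac bd
}.

Arguments le {_}. Arguments src {_}. Arguments tgt {_}.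
Arguments mul {_}. Arguments one {_}.

Definition is_functor {C D : GCat} (F : C -> D) : Prop :=
  (forall a b, le a b -> le (F a) (F b)) /\
  (forall a, F (src a) = src (F a)) /\
  (forall a, F (tgt a) = tgt (F a)) /\
  (forall a b ab, mul a b = Some ab -> mul (F a) (F b) = Some (F ab)) /\
  (forall a, F (one a) = one (F a)).

Definition invertible {C : GCat} (a : C) : Prop :=
  exists b : C, mul a b = Some (one (tgt a)) /\ mul b a = Some (one (src a)).

Definition sim {C : GCat} (a b : C) : Prop :=
  exists th1 th2 x : C, invertible th1 /\ invertible th2 /\
    mul th1 a = Some x /\ mul b th2 = Some x.

Definition cls {C : GCat} (a : C) : C -> Prop := fun b => sim a b.

Definition is_class {C : GCat} (X : C -> Prop) : Prop := exists a : C, X = cls a.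

(** Structure of the category of invertibles ~C (order is trivial). *)
Definition tsrc {C : GCat} (X : C -> Prop) : C -> Prop :=
  fun y => exists a : C, X a /\ sim (one (src a)) y.
Definition ttgt {C : GCat} (X : C -> Prop) : C -> Prop :=
  fun y => exists a : C, X a /\ sim (one (tgt a)) y.

(** theta1 a theta2 b theta3 (left-nested; associativity makes nesting irrelevant). *)
Definition mul5 {C : GCat} (x1 x2 x3 x4 x5 : C) : option C :=
  obind (fun u => mul u x5)
    (obind (fun u => mul u x4)
      (obind (fun u => mul u x3) (mul x1 x2))).

Definition tprod {C : GCat} (X Y : C -> Prop) : C -> Prop :=
  fun z => exists a b th1 th2 th3 : C, X a /\ Y b /\
    invertible th1 /\ invertible th2 /\ invertible th3 /\
    mul5 th1 a th2 b th3 = Some z.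

Definition tmap {C D : GCat} (F : C -> D) (X : C -> Prop) : D -> Prop :=
  fun y => exists a : C, X a /\ sim (F a) y.

(** Isomorphism of the categories of invertibles ~C and ~D: mutually
    inverse maps between the sets of classes, preserving source, target
    and the product (the product of two classes being a union of classes,
    it is described by which classes it contains). *)
Definition tiso (C D : GCat) : Prop :=
  exists (Phi : (C -> Prop) -> (D -> Prop)) (Psi : (D -> Prop) -> (C -> Prop)),
    (forall X, is_class X -> is_class (Phi X) /\ Psi (Phi X) = X) /\
    (forall Y, is_class Y -> is_class (Psi Y) /\ Phi (Psi Y) = Y) /\
    (forall X, is_class X -> Phi (tsrc X) = tsrc (Phi X)) /\
    (forall X, is_class X -> Phi (ttgt X) = ttgt (Phi X)) /\
    (forall X Y Z, is_class X -> is_class Y -> is_class Z ->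
       ((forall z, Z z -> tprod X Y z) <->
        (forall z, Phi Z z -> tprod (Phi X) (Phi Y) z))).

Definition fun_iso {C D : GCat} (F G : C -> D) : Prop :=
  exists th1 th2 : C -> D,
    (forall a, invertible (th1 a)) /\ (forall a, invertible (th2 a)) /\
    (forall a, exists x, mul (th1 a) (F a) = Some x /\ mul (G a) (th2 a) = Some x).

Definition cond1 (C D : GCat) : Prop :=
  exists (F : C -> D) (G : D -> C), is_functor F /\ is_functor G /\
    (forall X, is_class X -> tmap G (tmap F X) = X) /\
    (forall Y, is_class Y -> tmap F (tmap G Y) = Y).

Definition cond2 (C D : GCat) : Prop :=
  exists (F : C -> D) (G : D -> C), is_functor F /\ is_functor G /\
    fun_iso (fun y => F (G y)) (fun y => y) /\
    fun_iso (fun x => G (F x)) (fun x => x).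

(* Main.v *)
Require Import Defs.
From Stdlib Require Import IndefiniteDescription FunctionalExtensionality PropExtensionality.

Lemma le_eq (C : GCat) (x y : C) : le x y -> x = y.
Proof.
  intro H. destruct (mul (one x) (one y)) as [d|] eqn:E.
  - pose proof (one_left _ _ _ E) as Hd. subst d.
    destruct (mul_src_tgt _ _ _ E) as [_ Ht]. rewrite !one_tgt in Ht. congruence.
  - exfalso. apply (proj2 (mul_defined C (one x) (one y))).
    + rewrite one_src, one_tgt. exact H.
    + exact E.
Qed.

Lemma mul_eq (C : GCat) (a b ab : C) : mul a b = Some ab -> src a = tgt b.
Proof. intro E. apply le_eq. apply (mul_defined C a b). congruence. Qed.

Lemma mul_ex (C : GCat) (a b : C) : src a = tgt b -> exists ab, mul a b = Some ab.
Proof.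
  intro H. destruct (mul a b) eqn:E; eauto. exfalso.
  apply (proj2 (mul_defined C a b)); [rewrite H; apply le_refl | exact E].
Qed.

Lemma one_l (C : GCat) (a : C) : mul (one (tgt a)) a = Some a.
Proof.
  destruct (mul_ex C (one (tgt a)) a) as [d E]. { rewrite one_src; reflexivity. }
  rewrite E. f_equal. exact (one_left _ _ _ E).
Qed.

Lemma one_r (C : GCat) (a : C) : mul a (one (src a)) = Some a.
Proof.
  destruct (mul_ex C a (one (src a))) as [d E]. { rewrite one_tgt; reflexivity. }
  rewrite E. f_equal. exact (one_right _ _ _ E).
Qed.

Lemma assocLR (C : GCat) (a b c ab r : C) : mul a b = Some ab -> mul ab c = Some r ->
  exists bc, mul b c = Some bc /\ mul a bc = Some r.
Proof.
  intros E1 E2. pose proof (mul_assoc C a b c) as H. rewrite E1 in H. simpl in H.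
  rewrite E2 in H. assert (Hd : Some r <> None) by discriminate.
  specialize (H (or_introl Hd)).
  destruct (mul b c) as [bc|]; simpl in H; [exists bc; auto | discriminate].
Qed.

Lemma assocRL (C : GCat) (a b c bc r : C) : mul b c = Some bc -> mul a bc = Some r ->
  exists ab, mul a b = Some ab /\ mul ab c = Some r.
Proof.
  intros E1 E2. pose proof (mul_assoc C a b c) as H. rewrite E1 in H. simpl in H.
  rewrite E2 in H. assert (Hd : Some r <> None) by discriminate.
  specialize (H (or_intror Hd)).
  destruct (mul a b) as [ab|]; simpl in H; [exists ab; auto | discriminate].
Qed.

Lemma inv_comp (C : GCat) (u v uv : C) : invertible u -> invertible v ->
  mul u v = Some uv -> invertible uv.
Proof.
  intros [u' [Hu1 Hu2]] [v' [Hv1 Hv2]] E.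
  pose proof (mul_eq _ _ _ _ Hu1) as e1.
  pose proof (mul_eq _ _ _ _ Hv2) as e2.
  pose proof (mul_eq _ _ _ _ E) as e3.
  destruct (mul_ex C v' u') as [w Ew]. { congruence. }
  destruct (mul_src_tgt _ _ _ E) as [s1 t1].
  exists w. split.
  - assert (Hm : mul (one (tgt v)) u' = Some u').
    { pose proof (one_l C u') as h.
      pose proof (mul_src_tgt _ _ _ Hu2) as [_ hh]. rewrite one_tgt in hh.
      replace (tgt v) with (tgt u') by congruence. exact h. }
    destruct (assocLR _ _ _ _ _ _ Hv1 Hm) as [bc [B1 B2]].
    rewrite Ew in B1. injection B1 as <-.
    destruct (assocRL _ _ _ _ _ _ B2 Hu1) as [ab [A1 A2]].
    rewrite E in A1. injection A1 as <-. rewrite t1. exact A2.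
  - assert (Hm : mul (one (src u)) v = Some v).
    { rewrite e3. apply one_l. }
    destruct (assocLR _ _ _ _ _ _ Hu2 Hm) as [bc [B1 B2]].
    rewrite E in B1. injection B1 as <-.
    destruct (assocRL _ _ _ _ _ _ B2 Hv2) as [ab [A1 A2]].
    rewrite Ew in A1. injection A1 as <-. rewrite s1. exact A2.
Qed.

Lemma inv_inv (C : GCat) (t t' : C) : mul t t' = Some (one (tgt t)) ->
  mul t' t = Some (one (src t)) -> invertible t'.
Proof.
  intros H1 H2. exists t.
  destruct (mul_src_tgt _ _ _ H1) as [a1 _]. rewrite one_src in a1.
  destruct (mul_src_tgt _ _ _ H2) as [_ a2]. rewrite one_tgt in a2.
  rewrite <- a1, <- a2. split; assumption.
Qed.

Lemma inv_one (C : GCat) (x : C) : invertible (one x).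
Proof.
  exists (one x). pose proof (one_l C (one x)) as h. rewrite one_tgt in h.
  rewrite one_tgt, one_src. split; exact h.
Qed.

Lemma sim_refl (C : GCat) (a : C) : sim a a.
Proof.
  exists (one (tgt a)), (one (src a)), a. repeat split; try apply inv_one.
  apply one_l. apply one_r.
Qed.

Lemma sim_sym (C : GCat) (a b : C) : sim a b -> sim b a.
Proof.
  intros [th1 [th2 [x [[th1' [I1 I1']] [[th2' [I2 I2']] [E1 E2]]]]]].
  assert (Hm : mul (one (src th1)) a = Some a).
  { rewrite (mul_eq _ _ _ _ E1). apply one_l. }
  destruct (assocLR _ _ _ _ _ _ I1' Hm) as [bc [B1 B2]].
  rewrite E1 in B1. injection B1 as <-.
  destruct (assocRL _ _ _ _ _ _ E2 B2) as [p [P1 P2]].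
  assert (Hm2 : mul p (one (tgt th2)) = Some p).
  { rewrite <- (mul_eq _ _ _ _ P2). apply one_r. }
  destruct (assocRL _ _ _ _ _ _ I2 Hm2) as [ab [A1 A2]].
  rewrite P2 in A1. injection A1 as <-.
  exists th1', th2', p. repeat split.
  - exact (inv_inv _ _ _ I1 I1').
  - exact (inv_inv _ _ _ I2 I2').
  - exact P1.
  - exact A2.
Qed.

Lemma sim_trans (C : GCat) (a b c : C) : sim a b -> sim b c -> sim a c.
Proof.
  intros [th1 [th2 [x [J1 [J2 [E1 E2]]]]]] [p1 [p2 [y [K1 [K2 [F1 F2]]]]]].
  destruct (mul_ex C y th2) as [r R].
  { destruct (mul_src_tgt _ _ _ F1) as [h _]. rewrite h. exact (mul_eq _ _ _ _ E2). }
  destruct (assocLR _ _ _ _ _ _ F1 R) as [bc [B1 B2]].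
  rewrite E2 in B1. injection B1 as <-.
  destruct (assocRL _ _ _ _ _ _ E1 B2) as [u [U1 U2]].
  destruct (assocLR _ _ _ _ _ _ F2 R) as [v [V1 V2]].
  exists u, v, r. repeat split; auto.
  - exact (inv_comp _ _ _ _ K1 J1 U1).
  - exact (inv_comp _ _ _ _ K2 J2 V1).
Qed.

Lemma functor_inv (C D : GCat) (H : C -> D) (t : C) : is_functor H -> invertible t -> invertible (H t).
Proof.
  intros [_ [hs [ht [hm ho]]]] [t' [T1 T2]]. exists (H t'). split.
  - rewrite (hm _ _ _ T1), ho, ht. reflexivity.
  - rewrite (hm _ _ _ T2), ho, hs. reflexivity.
Qed.

Lemma functor_sim (C D : GCat) (H : C -> D) (a b : C) : is_functor H -> sim a b -> sim (H a) (H b).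
Proof.
  intros hH [th1 [th2 [x [J1 [J2 [E1 E2]]]]]].
  destruct hH as [h0 [hs [ht [hm ho]]]] eqn:HH.
  exists (H th1), (H th2), (H x). repeat split.
  - apply functor_inv; assumption.
  - apply functor_inv; assumption.
  - exact (hm _ _ _ E1).
  - exact (hm _ _ _ E2).
Qed.

Lemma one_sim (C : GCat) (t : C) : invertible t -> sim (one (src t)) (one (tgt t)).
Proof.
  intro I. exists t, t, t. repeat split; auto. apply one_r. apply one_l.
Qed.

Lemma sim_src (C : GCat) (a b : C) : sim a b -> sim (one (src a)) (one (src b)).
Proof.
  intros [th1 [th2 [x [J1 [J2 [E1 E2]]]]]].
  destruct (mul_src_tgt _ _ _ E1) as [s1 _].
  destruct (mul_src_tgt _ _ _ E2) as [s2 _].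
  rewrite (mul_eq _ _ _ _ E2).
  replace (src a) with (src th2) by congruence. apply one_sim; auto.
Qed.

Lemma sim_tgt (C : GCat) (a b : C) : sim a b -> sim (one (tgt a)) (one (tgt b)).
Proof.
  intros [th1 [th2 [x [J1 [J2 [E1 E2]]]]]].
  destruct (mul_src_tgt _ _ _ E1) as [_ t1].
  destruct (mul_src_tgt _ _ _ E2) as [_ t2].
  rewrite <- (mul_eq _ _ _ _ E1).
  replace (tgt b) with (tgt th1) by congruence. apply one_sim; auto.
Qed.

Lemma cls_eq (C : GCat) (a b : C) : sim a b -> cls a = cls b.
Proof.
  intro H. extensionality y. apply propositional_extensionality. unfold cls. split; intro K.
  - exact (sim_trans _ _ _ _ (sim_sym _ _ _ H) K).
  - exact (sim_trans _ _ _ _ H K).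
Qed.

Lemma tmap_cls (C D : GCat) (H : C -> D) (a : C) : is_functor H -> tmap H (cls a) = cls (H a).
Proof.
  intro hH. extensionality y. apply propositional_extensionality. unfold tmap, cls. split.
  - intros [a' [K1 K2]]. exact (sim_trans _ _ _ _ (functor_sim _ _ _ _ _ hH K1) K2).
  - intro K. exists a. split; auto. apply sim_refl.
Qed.

Lemma tsrc_cls (C : GCat) (a : C) : tsrc (cls a) = cls (one (src a)).
Proof.
  extensionality y. apply propositional_extensionality. unfold tsrc, cls. split.
  - intros [a' [K1 K2]]. exact (sim_trans _ _ _ _ (sim_src _ _ _ K1) K2).
  - intro K. exists a. split; auto. apply sim_refl.
Qed.

Lemma ttgt_cls (C : GCat) (a : C) : ttgt (cls a) = cls (one (tgt a)).
Proof.
  extensionality y. apply propositional_extensionality. unfold ttgt, cls. split.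
  - intros [a' [K1 K2]]. exact (sim_trans _ _ _ _ (sim_tgt _ _ _ K1) K2).
  - intro K. exists a. split; auto. apply sim_refl.
Qed.

Lemma mul5_inv (C : GCat) (x1 x2 x3 x4 x5 z : C) : mul5 x1 x2 x3 x4 x5 = Some z ->
  exists p1 p2 p3, mul x1 x2 = Some p1 /\ mul p1 x3 = Some p2 /\ mul p2 x4 = Some p3 /\
    mul p3 x5 = Some z.
Proof.
  unfold mul5. destruct (mul x1 x2) as [p1|] eqn:E1; simpl; [|intro; discriminate].
  destruct (mul p1 x3) as [p2|] eqn:E2; simpl; [|intro; discriminate].
  destruct (mul p2 x4) as [p3|] eqn:E3; simpl; [|intro; discriminate].
  intro E. exists p1, p2, p3. repeat split; (assumption || reflexivity).
Qed.

Lemma mul5_intro (C : GCat) (x1 x2 x3 x4 x5 z p1 p2 p3 : C) :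
  mul x1 x2 = Some p1 -> mul p1 x3 = Some p2 -> mul p2 x4 = Some p3 ->
  mul p3 x5 = Some z -> mul5 x1 x2 x3 x4 x5 = Some z.
Proof. unfold mul5. intros -> ; simpl. intros ->; simpl. intros ->; simpl. auto. Qed.

Lemma tprod_sim (C : GCat) (X Y : C -> Prop) (z w : C) : tprod X Y z -> sim z w -> tprod X Y w.
Proof.
  intros [a [b [th1 [th2 [th3 [Xa [Yb [I1 [I2 [I3 M]]]]]]]]]]
    [s1 [s2 [x [J1 [[s2' [J2 J2']] [E1 E2]]]]]].
  destruct (mul5_inv _ _ _ _ _ _ _ M) as [p1 [p2 [p3 [M1 [M2 [M3 M4]]]]]].
  destruct (assocRL _ _ _ _ _ _ M4 E1) as [q3 [Q3 Q3']].
  destruct (assocRL _ _ _ _ _ _ M3 Q3) as [q2 [Q2 Q2']].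
  destruct (assocRL _ _ _ _ _ _ M2 Q2) as [q1 [Q1 Q1']].
  destruct (assocRL _ _ _ _ _ _ M1 Q1) as [u [U1 U2]].
  assert (Hm : mul w (one (tgt s2)) = Some w).
  { rewrite <- (mul_eq _ _ _ _ E2). apply one_r. }
  destruct (assocRL _ _ _ _ _ _ J2 Hm) as [ab [A1 A2]].
  rewrite E2 in A1. injection A1 as <-.
  destruct (assocLR _ _ _ _ _ _ Q3' A2) as [v [V1 V2]].
  exists a, b, u, th2, v. repeat split; auto.
  - exact (inv_comp _ _ _ _ J1 I1 U1).
  - exact (inv_comp _ _ _ _ I3 (inv_inv _ _ _ J2 J2') V1).
  - exact (mul5_intro _ _ _ _ _ _ _ _ _ _ U2 Q1' Q2' V2).
Qed.

Lemma tprod_map (C D : GCat) (H : C -> D) (X Y : C -> Prop) (z : C) : is_functor H ->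
  tprod X Y z -> tprod (tmap H X) (tmap H Y) (H z).
Proof.
  intros hH [a [b [th1 [th2 [th3 [Xa [Yb [I1 [I2 [I3 M]]]]]]]]]].
  destruct (mul5_inv _ _ _ _ _ _ _ M) as [p1 [p2 [p3 [M1 [M2 [M3 M4]]]]]].
  pose proof hH as [_ [_ [_ [hm _]]]].
  exists (H a), (H b), (H th1), (H th2), (H th3). repeat split.
  - exists a. split; auto. apply sim_refl.
  - exists b. split; auto. apply sim_refl.
  - apply functor_inv; auto.
  - apply functor_inv; auto.
  - apply functor_inv; auto.
  - exact (mul5_intro _ _ _ _ _ _ _ _ _ _ (hm _ _ _ M1) (hm _ _ _ M2) (hm _ _ _ M3) (hm _ _ _ M4)).
Qed.

Lemma prod_transport (C D : GCat) (H : C -> D) (X Y Z : C -> Prop) : is_functor H ->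
  (forall z, Z z -> tprod X Y z) -> forall w, tmap H Z w -> tprod (tmap H X) (tmap H Y) w.
Proof.
  intros hH HZ w [z [Zz S]]. exact (tprod_sim _ _ _ _ _ (tprod_map _ _ _ _ _ _ hH (HZ z Zz)) S).
Qed.

Lemma sim_fun_iso (C : GCat) (K : C -> C) : (forall a, sim (K a) a) -> fun_iso K (fun a => a).
Proof.
  intro H.
  destruct (functional_choice (fun a (p : C * C) => invertible (fst p) /\ invertible (snd p) /\
     exists x, mul (fst p) (K a) = Some x /\ mul a (snd p) = Some x)) as [f Hf].
  { intro a. destruct (H a) as [t1 [t2 [x [A [B [E1 E2]]]]]]. exists (t1, t2). simpl. eauto. }
  exists (fun a => fst (f a)), (fun a => snd (f a)). repeat split.
  - intro a. apply (Hf a).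
  - intro a. apply (Hf a).
  - intro a. apply (Hf a).
Qed.

Lemma fun_iso_sim (C : GCat) (K : C -> C) : fun_iso K (fun a => a) -> forall a, sim (K a) a.
Proof.
  intros [t1 [t2 [A [B E]]]] a. destruct (E a) as [x [E1 E2]]. exists (t1 a), (t2 a), x. auto.
Qed.

Theorem mainTheorem9 (C D : GCat) :
  (cond1 C D <-> cond2 C D) /\ (cond1 C D -> tiso C D).
Proof.
  split; [split|].
  - intros [F [G [hF [hG [h1 h2]]]]]. exists F, G. split; [exact hF|]. split; [exact hG|]. split; apply sim_fun_iso.
    + intro b. assert (E : tmap F (tmap G (cls b)) = cls b) by (apply h2; exists b; reflexivity).
      rewrite tmap_cls, tmap_cls in E by assumption.
      change (cls (F (G b)) b). rewrite E. apply sim_refl.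
    + intro a. assert (E : tmap G (tmap F (cls a)) = cls a) by (apply h1; exists a; reflexivity).
      rewrite tmap_cls, tmap_cls in E by assumption.
      change (cls (G (F a)) a). rewrite E. apply sim_refl.
  - intros [F [G [hF [hG [h1 h2]]]]]. exists F, G. split; [exact hF|]. split; [exact hG|]. split.
    + intros X [a ->]. rewrite tmap_cls, tmap_cls by assumption. apply cls_eq.
      exact (fun_iso_sim _ _ h2 a).
    + intros Y [b ->]. rewrite tmap_cls, tmap_cls by assumption. apply cls_eq.
      exact (fun_iso_sim _ _ h1 b).
  - intros [F [G [hF [hG [h1 h2]]]]]. exists (tmap F), (tmap G). repeat split.
    + destruct H as [a ->]. exists (F a). apply tmap_cls; auto.
    + apply h1; auto.
    + destruct H as [a ->]. exists (G a). apply tmap_cls; auto.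
    + apply h2; auto.
    + intros X [a ->]. rewrite tsrc_cls, !tmap_cls, tsrc_cls by assumption.
      destruct hF as [_ [hs [_ [_ ho]]]]. rewrite ho, hs. reflexivity.
    + intros X [a ->]. rewrite ttgt_cls, !tmap_cls, ttgt_cls by assumption.
      destruct hF as [_ [_ [ht [_ ho]]]]. rewrite ho, ht. reflexivity.
    + intros HZ. apply prod_transport; auto.
    + intros HZ. rewrite <- (h1 X), <- (h1 Y), <- (h1 Z) by assumption.
      apply prod_transport; auto.
Qed.
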